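(* Every nice graph $G=(V,E)$ with $V\neq\emptyset$ has a good subset.
   Context: All graphs are finite and simple. An edge is isolated if both its ends have degree $1$; a graph is nice if it has no isolated edges. For $J\subseteq V$: $E_{J,2}$ is the set of isolated edges of $G-J$; $E_{J,3}$ the set of edges with exactly one end in $J$; $E_{J,4}$ the set of edges with both ends in $J$; $G_{J,3}=(V,E_{J,3})$ and $G_{J,4}=(J,E_{J,4})$. For $i\in V\setminus J$, if $N_{G_{J,3}}(i)=\{j\}$ then $i$ is a private neighbour of $j$. A set $J\subseteq V$ is a good subset if $J\neq\emptyset$ and: (J1) $G_{J,4}$ has maximum degree at most $1$; (J2) $G_{J,3}$ has no isolated edges; (J3) each $j\in J$ has at most one private neighbour; (J4) for each edge $e=\{j,j'\}\in E_{J,4}$ there is a vertex $i_e\in V\setminus J$ with $\{j,j'\}\subseteq N_{G_{J,3}}(i_e)$, neither $j$ nor $j'$ has a private neighbour, and $i_e\neq i_{e'}$ for distinct $e,e'\in E_{J,4}$; (J5) for every edge $e\in E_{J,2}$, each end vertex of $e$ has at least one neighbour in $J$. *)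

(* Defs.v *)
(* A finite simple graph is a symmetric irreflexive relation
   e on a finType T (vertex set V = T). *)
From mathcomp Require Import all_boot.
Set Implicit Arguments. Unset Strict Implicit. Unset Printing Implicit Defensive.

Section Graph.
Variables (T : finType) (e : rel T).

Definition nbhd (x : T) : {set T} := [set y | e x y].
Definition deg (x : T) : nat := #|nbhd x|.

Definition isolated_edge (x y : T) : Prop := e x y /\ deg x = 1 /\ deg y = 1.

Definition nice : Prop := forall x y : T, ~ isolated_edge x y.

Variable J : {set T}.

(* G - J : induced subgraph on V \ J *)
Definition e2 (x y : T) : bool := [&& e x y, x \notin J & y \notin J].
Definition deg2 (x : T) : nat := #|[set y | e2 x y]|.
Definition inE2 (x y : T) : Prop := e2 x y /\ deg2 x = 1 /\ deg2 y = 1.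

Definition e3 (x y : T) : bool := e x y && ((x \in J) != (y \in J)).
Definition N3 (x : T) : {set T} := [set y | e3 x y].
Definition deg3 (x : T) : nat := #|N3 x|.

Definition e4 (x y : T) : bool := [&& e x y, x \in J & y \in J].

Definition private_nb (j i : T) : bool := (i \notin J) && (N3 i == [set j]).
Definition privates (j : T) : {set T} := [set i | private_nb j i].

Definition J1 : Prop := forall j, j \in J -> #|[set y | e4 j y]| <= 1.
Definition J2 : Prop := forall x y, ~ (e3 x y /\ deg3 x = 1 /\ deg3 y = 1).
Definition J3 : Prop := forall j, j \in J -> #|privates j| <= 1.
(* the choice e |-> i_e is given as a function of the (unordered) edge {j,j'} *)
Definition J4 : Prop :=
  exists f : T -> T -> T,
    (forall j j', e4 j j' -> f j j' = f j' j) /\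
    (forall j j', e4 j j' ->
       [/\ f j j' \notin J, j \in N3 (f j j'), j' \in N3 (f j j'),
           privates j = set0 & privates j' = set0]) /\
    (forall j j' k k', e4 j j' -> e4 k k' -> f j j' = f k k' ->
       [set j; j'] = [set k; k']).
Definition J5 : Prop :=
  forall x y, inE2 x y ->
    (exists z, (z \in J) && e x z) /\ (exists z, (z \in J) && e y z).

Definition good_subset : Prop := J != set0 /\ J1 /\ J2 /\ J3 /\ J4 /\ J5.

End Graph.

(* Main.v *)
Require Import Defs.
From mathcomp Require Import all_boot.
From Stdlib Require Import Classical.
From mathcomp Require Import zify.
Set Implicit Arguments. Unset Strict Implicit. Unset Printing Implicit Defensive.

Section Proof.
Variables (T : finType) (e : rel T).
Hypotheses (esym : symmetric e) (eirr : irreflexive e) (enice : nice e).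

Lemma N3_out (J : {set T}) x y : x \notin J -> (y \in N3 e J x) = (y \in J) && e x y.
Proof. move=> Hx; rewrite inE /e3 (negbTE Hx); by case: (y \in J); rewrite ?andbT ?andbF. Qed.

Lemma N3_in (J : {set T}) x y : x \in J -> (y \in N3 e J x) = (y \notin J) && e x y.
Proof. move=> Hx; rewrite inE /e3 Hx; by case: (y \in J); rewrite ?andbT ?andbF. Qed.

Lemma priv_out (J : {set T}) j i : i \in privates e J j -> i \notin J.
Proof. by rewrite inE => /andP[]. Qed.

Lemma priv_N3 (J : {set T}) j i : i \in privates e J j -> N3 e J i = [set j].
Proof. by rewrite inE => /andP[_ /eqP]. Qed.

Lemma priv_adj (J : {set T}) j i : i \in privates e J j -> (j \in J) /\ e i j.
Proof.
move=> H; have Hi := priv_out H; have := set11 j; rewrite -(priv_N3 H) N3_out //.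
by case/andP.
Qed.

Lemma priv_uniq (J : {set T}) j i k : i \in privates e J j -> k \in J -> e i k -> k = j.
Proof.
move=> H Hk Hik; have Hi := priv_out H.
have : k \in N3 e J i by rewrite N3_out // Hk Hik.
by rewrite (priv_N3 H) => /set1P.
Qed.

Lemma privI (J : {set T}) j i : i \notin J -> j \in J -> e i j ->
  (forall k, k \in J -> e i k -> k = j) -> i \in privates e J j.
Proof.
move=> Hi Hj Hij Hu; rewrite inE /private_nb Hi /=; apply/eqP/setP => k.
rewrite N3_out // inE; apply/andP/eqP => [[Hk Hik]|->]; first exact: Hu.
by rewrite Hj Hij.
Qed.

Definition indep (A : {set T}) := [forall a in A, forall b in A, ~~ e a b].

Lemma indepP A a b : indep A -> a \in A -> b \in A -> ~~ e a b.
Proof. by move=> /forall_inP H Ha Hb; move/forall_inP: (H a Ha); apply. Qed.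

Lemma max_indep (Q : {set T}) : exists A : {set T},
  [/\ A \subset Q, indep A,
      (forall x, x \in Q -> x \notin A -> exists2 a, a \in A & e x a) &
      (forall B : {set T}, B \subset Q -> indep B -> #|B| <= #|A|)].
Proof.
have P0 : (fun A : {set T} => (A \subset Q) && indep A) set0.
  by rewrite sub0set /=; apply/forall_inP => a; rewrite inE.
case: (@arg_maxnP _ set0 (fun A : {set T} => (A \subset Q) && indep A) (fun A : {set T} => #|A|) P0) => A /andP[sAQ iA] Hmax.
exists A; split => //; last by move=> B sB iB; apply: Hmax; rewrite sB.
move=> x xQ xA; case: (boolP [exists a in A, e x a]) => [/exists_inP//|/negP Hn]; exfalso.
have : (x |: A \subset Q) && indep (x |: A).
  rewrite subUset sub1set xQ sAQ /=; apply/forall_inP => a /setU1P Ha.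
  apply/forall_inP => b /setU1P Hb.
  case: Ha => [->|Ha]; case: Hb => [->|Hb].
  - by rewrite eirr.
  - by apply/negP => Hxb; apply: Hn; apply/exists_inP; exists b.
  - by apply/negP => Hax; apply: Hn; apply/exists_inP; exists a; rewrite // esym.
  - exact: indepP iA Ha Hb.
move/Hmax; rewrite cardsU1 xA => /=; by rewrite add1n ltnn.
Qed.

Definition domP (J : {set T}) := forall x, x \notin J -> exists2 y, y \in J & e x y.
Definition j1P (J : {set T}) := forall j k k', j \in J -> k \in J -> k' \in J ->
  e j k -> e j k' -> k = k'.
Definition EP (J : {set T}) := exists f : T -> T -> T,
    (forall j j', e4 e J j j' -> f j j' = f j' j) /\
    (forall j j', e4 e J j j' -> [/\ f j j' \notin J, e (f j j') j & e (f j j') j']) /\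
    (forall j j' k k', e4 e J j j' -> e4 e J k k' -> f j j' = f k k' ->
       [set j; j'] = [set k; k']).
Definition DP J := [/\ domP J, j1P J & EP J].

Definition iso (J : {set T}) := [set x in J | [forall y in J, ~~ e x y]].
Definition big2 (J : {set T}) := [set x in J | 1 < deg e x].
Definition Phi (J : {set T}) :=
  #|J| * #|T|.+1 * #|T|.+1 + #|iso J| * #|T|.+1 + #|big2 J|.

Lemma isoP (J : {set T}) x : reflect (x \in J /\ forall y, y \in J -> ~~ e x y) (x \in iso J).
Proof.
rewrite inE; apply: (iffP andP) => [[H /forall_inP H2]|[H H2]]; split => //.
by apply/forall_inP.
Qed.

Section Replace.
Variables (J Tt : {set T}) (j : T).
Hypotheses (DJ : DP J) (Hj : j \in J) (sT : Tt \subset privates e J j)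
  (iT : indep Tt) (t0 : T) (t0T : t0 \in Tt)
  (covT : forall p, p \in privates e J j -> p \notin Tt -> exists2 t, t \in Tt & e p t).

Let J' := (J :\ j) :|: Tt.

Lemma TtP t : t \in Tt -> t \in privates e J j.
Proof. by move=> Ht; apply: (subsetP sT). Qed.

Lemma Tt_out t : t \in Tt -> t \notin J.
Proof. by move/TtP/priv_out. Qed.

Lemma noedgeT t k : t \in Tt -> k \in J' -> ~~ e t k.
Proof.
move=> Ht; rewrite inE => /orP[|Hk]; last exact: indepP iT Ht Hk.
rewrite !inE => /andP[Hkj HkJ]; apply/negP => Htk.
by move: Hkj; rewrite (priv_uniq (TtP Ht) HkJ Htk) eqxx.
Qed.

Lemma J'inv k : k \in J' -> k \in Tt \/ (k \in J /\ k != j).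
Proof. by rewrite !inE => /orP[/andP[]|]; auto. Qed.

Lemma repl_D : DP J'.
Proof.
case: DJ => dJ jJ [f [fs [fp fi]]]; split.
- move=> x; rewrite !inE negb_or negb_and negbK => /andP[Hx xT].
  case: (boolP (x \in privates e J j)) => [Hp|Hnp].
    case: (covT Hp xT) => t Ht Hxt; exists t => //; by rewrite inE Ht orbT.
  case/orP: Hx => [/eqP ->|xJ].
    exists t0; last by rewrite esym; exact: (priv_adj (TtP t0T)).2.
    by rewrite inE t0T orbT.
  case: (dJ x xJ) => y yJ Hxy.
  case: (eqVneq y j) => [Eyj|Nyj].
    subst y.
    case: (boolP [exists k in J, (k != j) && e x k]) => [/exists_inP[k kJ /andP[kj xk]]|Hn].
      by exists k => //; rewrite !inE kj kJ.
    case/negP: Hnp; apply: privI => // k kJ xk; apply/eqP; apply/negPn/negP => kj.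
    by case/negP: Hn; apply/exists_inP; exists k => //; rewrite kj.
  by exists y => //; rewrite !inE Nyj yJ.
- move=> a k k' Ha Hk Hk' Hak Hak'.
  have HaJ : a \in J /\ a != j.
    case: (J'inv Ha) => [aT|//]; by move: (noedgeT aT Hk); rewrite Hak.
  have HkJ : forall z, z \in J' -> e a z -> z \in J.
    move=> z Hz Haz; case: (J'inv Hz) => [zT|[]//].
    by move: (noedgeT zT Ha); rewrite esym Haz.
  exact: (jJ a k k' HaJ.1 (HkJ _ Hk Hak) (HkJ _ Hk' Hak') Hak Hak').
- have e4J : forall a b, e4 e J' a b -> e4 e J a b /\ a != j.
    move=> a b /and3P[Hab Ha Hb].
    have aJ : a \in J /\ a != j.
      case: (J'inv Ha) => [aT|//]; by move: (noedgeT aT Hb); rewrite Hab.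
    have bJ : b \in J.
      case: (J'inv Hb) => [bT|[]//]; by move: (noedgeT bT Ha); rewrite esym Hab.
    by split; [rewrite /e4 Hab aJ.1 bJ | exact: aJ.2].
  exists f; split; [|split].
  + by move=> a b /e4J[/fs].
  + move=> a b /e4J[H4 aj]; case: (fp a b H4) => H1 H2 H3; split => //.
    rewrite !inE negb_or negb_and H1 orbT /=; apply/negP => HfT.
    move: aj; case/and3P: H4 => _ aJ _.
    by rewrite (priv_uniq (TtP HfT) aJ H2) eqxx.
  + move=> a b c d /e4J[H1 _] /e4J[H2 _]; exact: fi.
Qed.

Lemma repl_card : #|J'| = #|J|.-1 + #|Tt|.
Proof.
rewrite cardsU.
have -> : (J :\ j) :&: Tt = set0.
  apply/setP => x; rewrite !inE; apply/negbTE/negP => /andP[/andP[_ xJ] xT].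
  by move: (Tt_out xT); rewrite xJ.
by rewrite cards0 subn0 (cardsD1 j J) Hj add1n.
Qed.

Lemma repl_iso : ((iso J :\ j) :|: Tt) \subset iso J'.
Proof.
apply/subsetP => x; rewrite !inE => /orP[/and3P[xj xJ /forall_inP Hx]|xT].
  rewrite xj xJ /=; apply/forall_inP => y; rewrite !inE => /orP[/andP[_ yJ]|yT].
    exact: Hx.
  by rewrite esym; apply: noedgeT => //; rewrite !inE xj xJ.
rewrite xT orbT /=; apply/forall_inP => y Hy; apply: noedgeT => //.
Qed.

End Replace.

Section Add.
Variables (J : {set T}) (j p q : T).
Hypotheses (DJ : DP J) (jiso : j \in iso J) (pP : p \in privates e J j)
  (qP : q \in privates e J j) (pq : p != q) (epq : e p q).

Lemma add_D : DP (p |: J).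
Proof.
have pJ := priv_out pP; have qJ := priv_out qP.
case/isoP: jiso => Hj jI.
case: DJ => dJ jJ [f [fs [fp fi]]]; split.
- move=> x; rewrite inE negb_or => /andP[_ xJ]; case: (dJ x xJ) => y yJ xy.
  by exists y; rewrite // inE yJ orbT.
- have pN : forall k, k \in J -> e p k -> k = j by move=> k; exact: priv_uniq pP.
  move=> a k k'; rewrite !inE => Ha Hk Hk' ak ak'.
  case/orP: Ha => [/eqP Ha|aJ].
    subst a.
    have H : forall z, (z == p) || (z \in J) -> e p z -> z = j.
      by move=> z /orP[/eqP ->|zJ] pz; [rewrite eirr in pz | exact: pN].
    by rewrite (H _ Hk ak) (H _ Hk' ak').
  case/orP: Hk => [/eqP Hk|kJ]; case/orP: Hk' => [/eqP Hk'|k'J].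
  + by rewrite Hk Hk'.
  + subst k; have aj : a = j by apply: (priv_uniq pP aJ); rewrite esym.
    by subst a; move: (jI _ k'J); rewrite ak'.
  + subst k'; have aj : a = j by apply: (priv_uniq pP aJ); rewrite esym.
    by subst a; move: (jI _ kJ); rewrite ak.
  + exact: (jJ a k k' aJ kJ k'J ak ak').
- pose g a b := if ((a == j) && (b == p)) || ((a == p) && (b == j)) then q else f a b.
  have e4c : forall a b, e4 e (p |: J) a b ->
      [\/ (a = j /\ b = p), (a = p /\ b = j) | e4 e J a b].
    move=> a b /and3P[ab]; rewrite !inE => Ha Hb.
    case: (eqVneq a p) => [Ea|Na].
      subst a; have bJ : b \in J.
        by case/orP: Hb => [/eqP Eb|//]; subst b; rewrite eirr in ab.
      by move: (priv_uniq pP bJ ab) => ->; constructor 2.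
    have aJ : a \in J by move: Ha; rewrite (negbTE Na).
    case: (eqVneq b p) => [Eb|Nb].
      subst b; have := priv_uniq pP aJ; rewrite esym => H; move: (H ab) => ->; by constructor 1.
    have bJ : b \in J by move: Hb; rewrite (negbTE Nb).
    by constructor 3; rewrite /e4 ab aJ bJ.
  have gold : forall a b, e4 e J a b -> g a b = f a b.
    move=> a b /and3P[_ aJ bJ]; rewrite /g.
    have ap : (a == p) = false by apply/negbTE; apply: contraNneq pJ => <-.
    have bp : (b == p) = false by apply/negbTE; apply: contraNneq pJ => <-.
    by rewrite ap bp !andbF.
  have gnew1 : g j p = q by rewrite /g !eqxx.
  have gnew2 : g p j = q by rewrite /g !eqxx orbT.
  have qnot : forall a b, e4 e J a b -> f a b != q.
    move=> a b H; case: (fp a b H) => _ H1 H2; apply/eqP => Hf.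
    case/and3P: H => ab aJ bJ.
    have := priv_uniq qP aJ; rewrite -Hf => /(_ H1) aj.
    have := priv_uniq qP bJ; rewrite -Hf => /(_ H2) bj.
    by move: ab; rewrite aj bj eirr.
  have [qj ep] := priv_adj qP.
  exists g; split; [|split].
  + move=> a b /e4c[[-> ->]|[-> ->]|H]; first by rewrite gnew1 gnew2.
      by rewrite gnew1 gnew2.
    rewrite !gold //; first exact: fs.
    by case/and3P: H => ab aJ bJ; rewrite /e4 esym ab aJ bJ.
  + move=> a b /e4c[[-> ->]|[-> ->]|H].
    * rewrite gnew1; split => //; last by rewrite esym.
      by rewrite !inE negb_or qJ andbT eq_sym.
    * rewrite gnew2; split => //; last by rewrite esym.
      by rewrite !inE negb_or qJ andbT eq_sym.
    * rewrite gold //; case: (fp a b H) => H1 H2 H3; split => //.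
      rewrite !inE negb_or H1 andbT; apply/eqP => Hfp.
      case/and3P: H => ab aJ bJ.
      by move: (priv_uniq pP aJ); rewrite -Hfp => /(_ H2) aj;
         move: (priv_uniq pP bJ); rewrite -Hfp => /(_ H3) bj; move: ab; rewrite aj bj eirr.
  + have setjp : [set j; p] = [set p; j] by rewrite setUC.
    move=> a b c d Hab Hcd; case: (e4c _ _ Hab) => [[Ea Eb]|[Ea Eb]|H1];
      case: (e4c _ _ Hcd) => [[Ec Ed]|[Ec Ed]|H2]; (try subst a); (try subst b); (try subst c); (try subst d);
      (try rewrite gnew1); (try rewrite gnew2); (try rewrite (gold _ _ H1)); (try rewrite (gold _ _ H2));
      try (by move=> Hq; move: (qnot _ _ H1); rewrite Hq eqxx);
      try (by move=> Hq; move: (qnot _ _ H2); rewrite -Hq eqxx);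
      try (by move=> _; apply/setP => z; rewrite !inE orbC).
    exact: fi.
Qed.

Lemma add_card : #|p |: J| = #|J|.+1.
Proof. by rewrite cardsU1 (priv_out pP). Qed.
End Add.

Lemma init_D : exists J, DP J.
Proof.
case: (max_indep setT) => A [_ iA cov _]; exists A; split.
- by move=> x xA; case: (cov x (in_setT x) xA) => a aA xa; exists a.
- by move=> j k k' jA kA _ jk; move: (indepP iA jA kA); rewrite jk.
- exists (fun a _ => a); split; [|split].
  + by move=> a b /and3P[ab aA bA]; move: (indepP iA aA bA); rewrite ab.
  + by move=> a b /and3P[ab aA bA]; move: (indepP iA aA bA); rewrite ab.
  + by move=> a b c d /and3P[ab aA bA]; move: (indepP iA aA bA); rewrite ab.
Qed.

Lemma Phi_lt (J J' : {set T}) :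
  [\/ #|J| < #|J'|,
      (#|J| <= #|J'|) && (#|iso J| < #|iso J'|) |
      [&& #|J| <= #|J'|, #|iso J| <= #|iso J'| & #|big2 J| < #|big2 J'|]] ->
  Phi J < Phi J'.
Proof.
have b1 := max_card (mem (iso J)); have b2 := max_card (mem (big2 J)).
have b3 := max_card (mem (iso J')); have b4 := max_card (mem (big2 J')).
rewrite /Phi; move: b1 b2 b3 b4.
set n := #|T|; set a := #|J|; set a' := #|J'|; set i := #|iso J|; set i' := #|iso J'|.
set c := #|big2 J|; set c' := #|big2 J'|.
move=> b1 b2 b3 b4 [H|/andP[H1 H2]|/and3P[H1 H2 H3]]; nia.
Qed.

Lemma Phi_bound (J : {set T}) :
  Phi J <= #|T| * #|T|.+1 * #|T|.+1 + #|T| * #|T|.+1 + #|T|.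
Proof.
have b0 := max_card (mem J).
have b1 := max_card (mem (iso J)); have b2 := max_card (mem (big2 J)).
rewrite /Phi; apply: leq_add; first apply: leq_add.
- by rewrite !leq_mul2r b0 !orbT.
- by rewrite leq_mul2r b1 orbT.
- exact: b2.
Qed.

Lemma max_exists : exists J, DP J /\ forall J', DP J' -> Phi J' <= Phi J.
Proof.
set Bd := #|T| * #|T|.+1 * #|T|.+1 + #|T| * #|T|.+1 + #|T|.
suff H : forall k J, DP J -> Bd - Phi J <= k ->
    exists J, DP J /\ forall J', DP J' -> Phi J' <= Phi J.
  by case: init_D => J DJ; exact: (H _ J DJ (leqnn _)).
elim=> [|k IH] J DJ Hk.
  exists J; split => // J' _; apply: leq_trans (Phi_bound J') _.
  by rewrite -subn_eq0 -leqn0.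
case: (classic (exists J', DP J' /\ Phi J < Phi J')) => [[J' [DJ' HJ']]|Hn].
  apply: (IH J' DJ'); have := Phi_bound J'; lia.
exists J; split => // J' DJ'; rewrite leqNgt; apply/negP => Hlt.
by apply: Hn; exists J'.
Qed.

Lemma card_lt_incl (A B : {set T}) x : A \subset B -> x \in B -> x \notin A ->
  #|A| < #|B|.
Proof.
move=> sAB xB xA; have : x |: A \subset B by rewrite subUset sub1set xB sAB.
by move/subset_leq_card; rewrite cardsU1 xA.
Qed.

Section Max.
Variable J : {set T}.
Hypotheses (DJ : DP J) (Jmax : forall J', DP J' -> Phi J' <= Phi J).

Lemma no_better J' : DP J' -> Phi J < Phi J' -> False.
Proof. by move=> D H; move: (Jmax D); rewrite leqNgt H. Qed.

Lemma P1 j : j \in J -> j \notin iso J -> privates e J j = set0.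
Proof.
move=> Hj Hi; apply/eqP; apply/negPn/negP => /set0Pn[t0 Ht0].
case: (max_indep (privates e J j)) => A [sA iA cov mx].
have A0 : 0 < #|A|.
  apply: leq_trans (mx [set t0] _ _); first by rewrite cards1.
  - by rewrite sub1set.
  - by apply/forall_inP => a /set1P-> ; apply/forall_inP => b /set1P->; rewrite eirr.
case/card_gt0P: (A0) => a0 Ha0.
have D' := repl_D DJ sA iA Ha0 cov.
apply: (no_better D'); apply: Phi_lt; constructor 2; apply/andP; split.
  rewrite (repl_card Hj sA); move: (Hj); rewrite (cardsD1 j J) => ->; rewrite add1n /=.
  by rewrite -{1}(addn0 #|J :\ j|) ltn_add2l.
have Hi0 := Hi.
move: Hi; rewrite inE Hj /= => /forall_inPn[j' j'J /negPn jj'].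
have jneq : j' != j by apply/eqP => E; move: jj'; rewrite E eirr.
have sub : j' |: iso J \subset iso (J :\ j :|: A).
  rewrite subUset sub1set; apply/andP; split.
    apply/isoP; split; first by rewrite !inE j'J jneq.
    move=> y; rewrite !inE => /orP[/andP[yj yJ]|yA]; last first.
      by rewrite esym; apply: (noedgeT sA iA yA); rewrite !inE j'J jneq.
    case: DJ => _ jJ _; apply/negP => ej'y.
    have := jJ j' j y j'J Hj yJ; rewrite esym jj' => /(_ isT ej'y) E.
    by move: yj; rewrite E eqxx.
  apply: subset_trans (repl_iso sA iA); apply/subsetP => x xi.
  rewrite in_setU in_setD1 xi andbT; apply/orP; left; apply: contraNneq Hi0 => <-; by [].
have j'ni : j' \notin iso J.
  apply/negP => /isoP[_ H]; by move: (H j Hj); rewrite esym jj'.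
by move/subset_leq_card: sub; rewrite cardsU1 j'ni.
Qed.
Lemma P2 j : j \in iso J -> #|privates e J j| <= 1.
Proof.
move=> Hi; have Hj : j \in J by case/isoP: Hi.
rewrite leqNgt; apply/negP => /card_gt1P[p [q [pP qP pq]]].
case: (boolP (e p q)) => epq.
  have D' := add_D DJ Hi pP qP pq epq.
  apply: (no_better D'); apply: Phi_lt; constructor 1.
  by rewrite (add_card pP).
case: (max_indep (privates e J j)) => A [sA iA cov mx].
have A2 : 2 <= #|A|.
  apply: leq_trans (mx [set p; q] _ _).
  - by rewrite cards2 pq.
  - by rewrite subUset !sub1set pP qP.
  - apply/forall_inP => a /set2P Ha; apply/forall_inP => b /set2P Hb.
    case: Ha => ->; case: Hb => ->; rewrite ?eirr //; by rewrite esym.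
have : 0 < #|A| by apply: leq_trans A2.
case/card_gt0P => a0 Ha0.
have D' := repl_D DJ sA iA Ha0 cov.
apply: (no_better D'); apply: Phi_lt; constructor 1.
rewrite (repl_card Hj sA); move: (Hj); rewrite (cardsD1 j J) => ->; rewrite add1n /=.
by rewrite -{1}(addn1 #|J :\ j|) ltn_add2l.
Qed.

Lemma P3 j y : j \in iso J -> nbhd e j = [set y] -> y \in privates e J j -> False.
Proof.
move=> Hi Hn yP; have Hj : j \in J by case/isoP: Hi.
have ejy : e j y by have := set11 y; rewrite -Hn inE.
have sA : [set y] \subset privates e J j by rewrite sub1set.
have iA : indep [set y].
  by apply/forall_inP => a /set1P ->; apply/forall_inP => b /set1P ->; rewrite eirr.
have cov : forall p, p \in privates e J j -> p \notin [set y] -> exists2 t, t \in [set y] & e p t.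
  move=> p pP; have : p \in nbhd e j by rewrite inE esym; exact: (priv_adj pP).2.
  by rewrite Hn => ->.
have D' := repl_D DJ sA iA (set11 y) cov.
have yJ := priv_out yP.
have degj : deg e j = 1 by rewrite /deg Hn cards1.
have degy : 1 < deg e y.
  have : 0 < deg e y by apply/card_gt0P; exists j; rewrite inE esym.
  have : deg e y != 1 by apply/eqP => H; apply: (enice (x := j) (y := y)).
  by case: (deg e y) => [|[|]].
apply: (no_better D'); apply: Phi_lt; constructor 3; apply/and3P; split.
- by rewrite (repl_card Hj sA) cards1 (cardsD1 j J) Hj add1n addn1.
- apply: leq_trans (subset_leq_card (repl_iso sA iA)).
  have yi : y \notin iso J :\ j by rewrite in_setD1 inE (negbTE yJ) andbF.
  by rewrite setUC cardsU1 yi (cardsD1 j (iso J)) Hi add1n.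
- have sub : y |: big2 J \subset big2 (J :\ j :|: [set y]).
    apply/subsetP => x; rewrite !inE => /orP[/eqP ->|/andP[xJ dx]].
      by rewrite eqxx degy !orbT.
    rewrite xJ dx andbT andbT; apply/orP; left; apply/eqP => E; move: dx.
    by rewrite E degj.
  move/subset_leq_card: sub; rewrite cardsU1 inE (negbTE yJ) /=; by [].
Qed.
Lemma notiso j j' : j \in J -> j' \in J -> e j j' -> j \notin iso J.
Proof. by move=> _ j'J ejj'; apply/negP => /isoP[_ H]; move: (H _ j'J); rewrite ejj'. Qed.

Lemma L x y : x \in J -> e3 e J x y -> deg3 e J x = 1 -> deg3 e J y = 1 -> False.
Proof.
case: (DJ) => dJ jJ [f [fs [fp fi]]].
move=> xJ /andP[exy]; rewrite xJ /= => yJ d3x d3y.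
have : #|N3 e J x| == 1 by rewrite -/(deg3 e J x) d3x.
case/cards1P => z Nx.
have : y \in N3 e J x by rewrite N3_in // yJ exy.
rewrite Nx => /set1P Ez; subst z.
have : #|N3 e J y| == 1 by rewrite -/(deg3 e J y) d3y.
case/cards1P => z Ny.
have : x \in N3 e J y by rewrite N3_out // xJ esym exy.
rewrite Ny => /set1P Ez; subst z.
case: (boolP (x \in iso J)) => Hi.
  apply: (P3 Hi (y := y)).
    apply/setP => z; rewrite !inE; apply/idP/idP => [exz|/eqP ->//].
    have zJ : z \notin J by apply/negP => zJ; case/isoP: Hi => _ /(_ z zJ); rewrite exz.
    by apply/eqP; apply/set1P; rewrite -Nx N3_in // zJ exz.
  by rewrite inE /private_nb yJ Ny eqxx.
move: Hi; rewrite inE xJ /= => /forall_inPn[x' x'J /negPn xx'].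
have H4 : e4 e J x x' by rewrite /e4 xx' xJ x'J.
case: (fp _ _ H4) => fJ f1 f2.
have : f x x' \in N3 e J x by rewrite N3_in // fJ esym.
rewrite Nx => /set1P Ef; rewrite Ef in f2.
have : x' \in N3 e J y by rewrite N3_out // x'J f2.
rewrite Ny => /set1P Ex; subst x'.
by rewrite eirr in xx'.
Qed.

Lemma Jgood : 0 < #|T| -> good_subset e J.
Proof.
move=> HT; case: (DJ) => dJ jJ [f [fs [fp fi]]].
split; [|split; [|split; [|split; [|split]]]].
- case/card_gt0P: HT => x _; apply/set0Pn.
  case: (boolP (x \in J)) => [xJ|xJ]; first by exists x.
  by case: (dJ x xJ) => y yJ _; exists y.
- move=> j jJ0; apply/card_le1_eqP => a b; rewrite !inE => /and3P[ja _ aJ] /and3P[jb _ bJ].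
  by have := jJ j a b jJ0 aJ bJ ja jb; move=> ->.
- move=> x y [H3 [d3x d3y]].
  case: (boolP (x \in J)) => xJ; first exact: (L xJ H3 d3x d3y).
  have yJ : y \in J by move: H3 => /andP[_]; rewrite (negbTE xJ); case: (y \in J).
  apply: (L yJ _ d3y d3x).
  by move: H3; rewrite /e3 esym => /andP[-> ]; rewrite eq_sym.
- move=> j jJ0; case: (boolP (j \in iso J)) => Hi; first exact: P2.
  by rewrite P1 // cards0.
- exists f; split => //; split; last exact: fi.
  move=> j j' H4; case: (fp _ _ H4) => fJ f1 f2.
  case/and3P: (H4) => ejj' jJ0 j'J0; split => //.
  + by rewrite N3_out // jJ0 f1.
  + by rewrite N3_out // j'J0 f2.
  + by apply: P1 => //; exact: (notiso jJ0 j'J0 ejj').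
  + by apply: P1 => //; apply: (notiso j'J0 jJ0); rewrite esym.
- move=> x y [/and3P[_ xJ yJ] _]; split.
  + by case: (dJ x xJ) => z zJ xz; exists z; rewrite zJ xz.
  + by case: (dJ y yJ) => z zJ yz; exists z; rewrite zJ yz.
Qed.
End Max.
End Proof.

Theorem lemma4p1 (T : finType) (e : rel T) :
  symmetric e -> irreflexive e -> nice e -> 0 < #|T| ->
  exists J : {set T}, good_subset e J.
Proof.
move=> esym eirr enice HT.
case: (max_exists esym eirr) => J [DJ Jmax].
exists J; exact: (Jgood esym eirr enice DJ Jmax HT).
Qed.
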